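(* Let $C$ be a bialgebra over a commutative ring $\Bbbk$, with product $\mu$, unit $1_C$, coproduct $\Delta$ (iterated coproduct written $\Delta^{n-1}(c)=c^{(1)}\otimes\dots\otimes c^{(n)}$) and counit $\varepsilon$. Let $\mathcal{O}_C$ be the operad with multiplication with $\mathcal{O}_C(n)=C^{\otimes n}$, identity $1_C\in\mathcal{O}_C(1)$, partial compositions $$(a_1\otimes\dots\otimes a_m)\circ_i(b_1\otimes\dots\otimes b_n)=a_1\otimes\dots\otimes a_{i-1}\otimes a_i^{(1)}b_1\otimes\dots\otimes a_i^{(n)}b_n\otimes a_{i+1}\otimes\dots\otimes a_m,$$ multiplication $1_C\otimes 1_C\in\mathcal{O}_C(2)$ and $e=1\in\Bbbk=\mathcal{O}_C(0)$; its cochain complex is the cobar construction $\Omega C$ and its cohomology is $\mathrm{Cotor}^*_C(\Bbbk,\Bbbk)$, which thus carries a Gerstenhaber algebra structure. Let $\mathcal{C}o\mathcal{E}nd(C)$ be the operad with multiplication $\mathcal{C}o\mathcal{E}nd(C)(n)=\mathrm{Hom}_\Bbbk(C,C^{\otimes n})$, $\gamma(f;g_1,\dots,g_n)=(g_1\otimes\dots\otimes g_n)\circ f$, identity $\mathrm{id}_C$, multiplication $\Delta$ and $e=\varepsilon$; its cochain complex is the Hochschild cochain complex $\mathcal{C}^*_{coalg}(C,C)$ of the coalgebra $C$, whose cohomology $HH^*_{coalg}(C,C)$ is thus a Gerstenhaber algebra. Then the linear maps $ext:C^{\otimes n}\to\mathrm{Hom}_\Bbbk(C,C^{\otimes n})$,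 $ext(c_1\otimes\dots\otimes c_n)(c)=c^{(1)}c_1\otimes\dots\otimes c^{(n)}c_n$, induce an injective morphism of Gerstenhaber algebras $\mathrm{Cotor}^*_C(\Bbbk,\Bbbk)\hookrightarrow HH^*_{coalg}(C,C)$; i.e. $\mathrm{Cotor}^*_C(\Bbbk,\Bbbk)$ is a sub Gerstenhaber algebra of $HH^*_{coalg}(C,C)$.
   Context: A (non-symmetric, $\Bbbk$-linear) operad $O$ consists of $\Bbbk$-modules $O(n)$, $n\ge 0$, an identity $id\in O(1)$ and associative unital structure maps, equivalently partial compositions $\circ_i:O(m)\otimes O(n)\to O(m+n-1)$, $1\le i\le m$. An operad with multiplication is an operad with $\mu\in O(2)$, $e\in O(0)$ such that $\mu\circ_1\mu=\mu\circ_2\mu$ and $\mu\circ_1e=id=\mu\circ_2 e$. Its cochain complex $\mathcal{C}^*(O)$ has $O(n)$ in degree $n$ and differential $df=\mu\circ_2 f+\sum_{i=1}^n(-1)^if\circ_i\mu+(-1)^{n+1}\mu\circ_1 f$. The cup product $f\cup g=(\mu\circ_1 f)\circ_{m+1}g$ for $f\in O(m)$, $g\in O(n)$, and the bracket $\{f,g\}=f\bar\circ g-(-1)^{(m-1)(n-1)}g\bar\circ f$ with $f\bar\circ g=(-1)^{(m-1)(n-1)}\sum_{i=1}^m(-1)^{(n-1)(i-1)}f\circ_i g$, induce on the cohomology $H(\mathcal{C}^*(O))$ a Gerstenhaber algebra structure (graded commutative product plus degree $-1$ Lie bracket satisfying the Poisson rule). Morphisms of operads with multiplication induce morphisms of Gerstenhaber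 algebras. *)

(* Defs.v *)
From HB Require Import structures.
From mathcomp Require Import all_boot all_order all_algebra.
Set Implicit Arguments. Unset Strict Implicit. Unset Printing Implicit Defensive.
Import Order.TTheory GRing.Theory Num.Theory.
Local Open Scope ring_scope.

(* A (representative of an) element of C^{(x)n} is a formal finite sum
   sum_j r_j (c_j1 (x) ... (x) c_jn), encoded as a list of pairs
   (r_j, [:: c_j1; ...; c_jn]).  Two representatives denote the same
   element of C^{(x)n} iff every n-multilinear map C^n -> M (M any R-module)
   takes the same value on them (universal property of the tensor power).
   For n = 0 this gives C^{(x)0} = R.                                        *)

Definition tens (R : comPzRingType) (C : lmodType R) := seq (R * seq C).

Definition multilinear (R : comPzRingType) (C : lmodType R) (M : lmodType R)
  (n : nat) (phi : seq C -> M) : Prop :=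
  forall (s : seq C) (i : nat) (a : R) (u v : C), size s = n -> (i < n)%N ->
    phi (set_nth 0 s i (a *: u + v)) =
    a *: phi (set_nth 0 s i u) + phi (set_nth 0 s i v).

Definition teval (R : comPzRingType) (C : lmodType R) (M : lmodType R)
  (phi : seq C -> M) (x : tens C) : M :=
  \sum_(p <- x) p.1 *: phi p.2.

Definition twf (R : comPzRingType) (C : lmodType R) (n : nat) (x : tens C) : bool :=
  all (fun p => size p.2 == n) x.

Definition teq (R : comPzRingType) (C : lmodType R) (n : nat) (x y : tens C) : Prop :=
  forall (M : lmodType R) (phi : seq C -> M),
    multilinear n phi -> teval phi x = teval phi y.

Definition tneg (R : comPzRingType) (C : lmodType R) (x : tens C) : tens C :=
  [seq (- p.1, p.2) | p <- x].

(* Hom_R(C, C^{(x)n}): functions C -> tens C, valued in degree n, linear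
   modulo equality in C^{(x)n}; two of them are equal when pointwise equal. *)

Definition thom (R : comPzRingType) (C : lmodType R) (n : nat) (f : C -> tens C) : Prop :=
  (forall c, twf n (f c)) /\
  (forall (a : R) (u v : C),
     teq n (f (a *: u + v)) ([seq (a * p.1, p.2) | p <- f u] ++ f v)).

Definition heq (R : comPzRingType) (C : lmodType R) (n : nat) (f g : C -> tens C) : Prop :=
  forall c, teq n (f c) (g c).

(* An "opdata" packages the additive structure on the cochains, the partial
   compositions  circ i f g = f o_i g  (i is 1-based), and mu in O(2).       *)

Record opdata (X : Type) := OpData {
  oadd : X -> X -> X;
  oneg : X -> X;
  ozero : X;
  ocirc : nat -> X -> X -> X;
  omu : X }.

Section Generic.
Variables (X : Type) (O : opdata X).

Definition osgn (b : bool) (x : X) : X := if b then oneg O x else x.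

Definition osum (F : nat -> X) (s : seq nat) : X :=
  foldr (fun i acc => oadd O (F i) acc) (ozero O) s.

Definition odiff (n : nat) (f : X) : X :=
  oadd O (ocirc O 2 (omu O) f)
    (oadd O (osum (fun i => osgn (odd i) (ocirc O i f (omu O))) (iota 1 n))
            (osgn (odd n.+1) (ocirc O 1 (omu O) f))).

Definition ocup (m : nat) (f g : X) : X :=
  ocirc O m.+1 (ocirc O 1 (omu O) f) g.

(* The signs (-1)^{(m-1)(n-1)} and (-1)^{(n-1)(i-1)} are taken with integer
   exponents: the parity of (m-1)(n-1) is (~~ odd m) && (~~ odd n).          *)
Definition obar (m n : nat) (f g : X) : X :=
  osgn (~~ odd m && ~~ odd n)
    (osum (fun i => osgn (~~ odd n && odd i.-1) (ocirc O i f g)) (iota 1 m)).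

Definition obracket (m n : nat) (f g : X) : X :=
  oadd O (obar m n f g) (oneg O (osgn (~~ odd m && ~~ odd n) (obar n m g f))).

End Generic.

(* Iterated coproduct  Delta^{n-1}(c) = c^(1) (x) ... (x) c^(n), with the
   conventions Delta^{-1} = epsilon and Delta^0 = id.                       *)

Fixpoint deltaS (R : comPzRingType) (C : lmodType R) (Delta : C -> tens C)
    (n : nat) (c : C) : tens C :=
  match n with
  | 0 => [:: (1, [:: c])]
  | n'.+1 => flatten [seq [seq (p.1 * q.1, nth 0 p.2 0 :: q.2)
                          | q <- deltaS Delta n' (nth 0 p.2 1)] | p <- Delta c]
  end.

Definition deltan (R : comPzRingType) (C : lmodType R) (Delta : C -> tens C)
    (eps : C -> R) (n : nat) (c : C) : tens C :=
  match n with
  | 0 => [:: (eps c, [::])]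
  | n'.+1 => deltaS Delta n' c
  end.

Definition wmul (R : comPzRingType) (C : algType R) (s t : seq C) : seq C :=
  [seq p.1 * p.2 | p <- zip s t].

(* The operad O_C, O_C(n) = C^{(x)n}:
   (a_1..a_m) o_i (b_1..b_n) = a_1..a_{i-1} (a_i^(1) b_1) .. (a_i^(n) b_n) a_{i+1}..a_m
   (the arity n of the second argument is read off from its words). *)

Definition OC_circ (R : comPzRingType) (C : algType R) (Delta : C -> tens C)
    (eps : C -> R) (i : nat) (x y : tens C) : tens C :=
  flatten [seq flatten [seq
      [seq (p.1 * q.1 * t.1,
            take i.-1 p.2 ++ wmul t.2 q.2 ++ drop i p.2)
      | t <- deltan Delta eps (size q.2) (nth 0 p.2 i.-1)]
    | q <- y] | p <- x].

Definition OC_op (R : comPzRingType) (C : algType R) (Delta : C -> tens C)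
    (eps : C -> R) : opdata (tens C) :=
  @OpData _ (fun x y => x ++ y) (@tneg R C) [::] (OC_circ Delta eps)
    [:: (1, [:: 1; 1])].

Definition OC_e (R : comPzRingType) (C : algType R) : tens C := [:: (1, [::])].

Definition CE_circ (R : comPzRingType) (C : algType R) (i : nat)
    (f g : C -> tens C) : C -> tens C :=
  fun c => flatten [seq [seq (p.1 * q.1, take i.-1 p.2 ++ q.2 ++ drop i p.2)
                        | q <- g (nth 0 p.2 i.-1)] | p <- f c].

Definition CE_op (R : comPzRingType) (C : algType R) (Delta : C -> tens C)
    : opdata (C -> tens C) :=
  @OpData _ (fun f g c => f c ++ g c) (fun f c => tneg (f c)) (fun _ => [::])
    (@CE_circ R C) Delta.

Definition CE_e (R : comPzRingType) (C : algType R) (eps : C -> R) : C -> tens C :=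
  fun c => [:: (eps c, [::])].

Definition CE_id (R : comPzRingType) (C : algType R) : C -> tens C :=
  fun c => [:: (1, [:: c])].

Definition is_bialgebra (R : comPzRingType) (C : algType R)
    (Delta : C -> tens C) (eps : C -> R) : Prop :=
  [/\ thom 2 Delta /\
      (forall (a : R) (u v : C), eps (a *: u + v) = a * eps u + eps v),
      heq 3 (CE_circ 1 Delta Delta) (CE_circ 2 Delta Delta),
      (heq 1 (CE_circ 1 Delta (CE_e eps)) (@CE_id R C) /\
       heq 1 (CE_circ 2 Delta (CE_e eps)) (@CE_id R C)),
      ((forall a b : C, teq 2 (Delta (a * b))
          [seq (p.1 * q.1, wmul p.2 q.2) | p <- Delta a, q <- Delta b]) /\
       teq 2 (Delta 1) [:: (1, [:: 1; 1])]) &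
      ((forall a b : C, eps (a * b) = eps a * eps b) /\ eps 1 = 1)].

Definition ext (R : comPzRingType) (C : algType R) (Delta : C -> tens C)
    (eps : C -> R) (n : nat) (x : tens C) : C -> tens C :=
  fun c => flatten [seq [seq (p.1 * q.1, wmul q.2 p.2)
                        | q <- deltan Delta eps n c] | p <- x].

Definition OC_cobound (R : comPzRingType) (C : algType R) (Delta : C -> tens C)
    (eps : C -> R) (n : nat) (z : tens C) : Prop :=
  match n with
  | 0 => teq 0 z [::]
  | n'.+1 => exists y, twf n' y /\ teq n z (odiff (OC_op Delta eps) n' y)
  end.

Definition CE_cobound (R : comPzRingType) (C : algType R) (Delta : C -> tens C)
    (n : nat) (z : C -> tens C) : Prop :=
  match n with
  | 0 => heq 0 z (fun _ => [::])
  | n'.+1 => exists g, thom n' g /\ heq n z (odiff (CE_op Delta) n' g)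
  end.

Definition OC_cocycle (R : comPzRingType) (C : algType R) (Delta : C -> tens C)
    (eps : C -> R) (n : nat) (x : tens C) : Prop :=
  twf n x /\ teq n.+1 (odiff (OC_op Delta eps) n x) [::].

Definition CE_cocycle (R : comPzRingType) (C : algType R) (Delta : C -> tens C)
    (n : nat) (f : C -> tens C) : Prop :=
  thom n f /\ heq n.+1 (odiff (CE_op Delta) n f) (fun _ => [::]).

(* Main.v *)
Require Import Defs.
From HB Require Import structures.
From mathcomp Require Import all_boot all_order all_algebra.
From mathcomp Require Import zify.
Import Order.TTheory GRing.Theory Num.Theory.
Local Open Scope ring_scope.
Set Implicit Arguments. Unset Strict Implicit. Unset Printing Implicit Defensive.

Section Gen.
Variables (R : comPzRingType) (C : algType R).
Implicit Types (s t w : seq C) (x y z : tens C) (e : C).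

Lemma tevalE (M : lmodType R) (phi : seq C -> M) x :
  teval phi x = \sum_(p <- x) p.1 *: phi p.2.
Proof. by []. Qed.

Lemma teval_cat (M : lmodType R) (phi : seq C -> M) x y :
  teval phi (x ++ y : tens C) = teval phi x + teval phi y.
Proof. by rewrite /teval big_cat. Qed.

Lemma teval_nil (M : lmodType R) (phi : seq C -> M) : teval phi [::] = 0.
Proof. by rewrite /teval big_nil. Qed.

Lemma teval_neg (M : lmodType R) (phi : seq C -> M) x :
  teval phi (tneg x) = - teval phi x.
Proof. by rewrite /teval big_map -sumrN; apply: eq_bigr => p _; rewrite scaleNr. Qed.

Lemma teval_ext (M : lmodType R) (phi psi : seq C -> M) x :
  (forall p, p \in x -> phi p.2 = psi p.2) -> teval phi x = teval psi x.
Proof. by move=> H; rewrite /teval; apply: eq_big_seq => p /H ->. Qed.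

Lemma teval_lin (M : lmodType R) (F G H : seq C -> M) (a : R) x :
  (forall p, p \in x -> F p.2 = a *: G p.2 + H p.2) ->
  teval F x = a *: teval G x + teval H x.
Proof.
move=> E; rewrite /teval scaler_sumr -big_split /=; apply: eq_big_seq => p /E ->.
by rewrite scalerDr !scalerA mulrC.
Qed.

Lemma teval_flat (M : lmodType R) (phi : seq C -> M) x
   (G : R * seq C -> tens C) (F : R * seq C -> R * seq C -> seq C) :
  teval phi (flatten [seq [seq (p.1 * q.1, F p q) | q <- G p] | p <- x]) =
  \sum_(p <- x) p.1 *: \sum_(q <- G p) q.1 *: phi (F p q).
Proof.
rewrite /teval big_flatten big_map; apply: eq_bigr => p _.
rewrite big_map scaler_sumr; apply: eq_bigr => q _; by rewrite scalerA.
Qed.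

Lemma teval_scal (M : lmodType R) (phi : seq C -> M) x a :
  teval phi [seq (a * p.1, p.2) | p <- x] = a *: teval phi x.
Proof.
rewrite /teval big_map scaler_sumr; apply: eq_bigr => p _; by rewrite scalerA.
Qed.

Lemma teq_refl n x : teq n x x. Proof. by []. Qed.
Lemma teq_sym n x y : teq n x y -> teq n y x.
Proof. by move=> H M phi Hp; rewrite (H M phi Hp). Qed.
Lemma teq_trans n x y z : teq n x y -> teq n y z -> teq n x z.
Proof. by move=> H1 H2 M phi Hp; rewrite (H1 M phi Hp) (H2 M phi Hp). Qed.
Lemma teq_cat n x (x' : tens C) y (y' : tens C) : teq n x x' -> teq n y y' -> teq n (x ++ y) (x' ++ y').
Proof. by move=> H1 H2 M phi Hp; rewrite !teval_cat (H1 M phi Hp) (H2 M phi Hp). Qed.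
Lemma teq_neg n x y : teq n x y -> teq n (tneg x) (tneg y).
Proof. by move=> H M phi Hp; rewrite !teval_neg (H M phi Hp). Qed.

Lemma size_wmul s t : size (wmul s t) = minn (size s) (size t).
Proof. by rewrite /wmul size_map size_zip. Qed.

Lemma wmul_cons a b s t : wmul (a :: s) (b :: t) = a * b :: wmul s t.
Proof. by []. Qed.

Lemma wmul_cat s1 s2 t1 t2 : size s1 = size t1 ->
  wmul (s1 ++ s2) (t1 ++ t2) = wmul s1 t1 ++ wmul s2 t2.
Proof. by move=> H; rewrite /wmul zip_cat // map_cat. Qed.

Lemma wmul_take k s t : take k (wmul s t) = wmul (take k s) (take k t).
Proof.
elim: s t k => [|a s IH] [|b t] [|k] //=.
all: try (by rewrite IH).
all: by [case: (take k s) | case: (take k t)].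
Qed.

Lemma wmul_drop k s t : drop k (wmul s t) = wmul (drop k s) (drop k t).
Proof.
elim: s t k => [|a s IH] [|b t] [|k] //=.
all: try (by rewrite IH).
all: by [case: (drop k s) | case: (drop k t)].
Qed.

Lemma wmulA s t u : wmul (wmul s t) u = wmul s (wmul t u).
Proof. elim: s t u => [|a s IH] [|b t] [|c u] //=. by rewrite !wmul_cons IH mulrA. Qed.

Lemma wmul_nseq1l s : wmul (nseq (size s) 1) s = s.
Proof. elim: s => [|a s IH] //=. by rewrite wmul_cons IH mul1r. Qed.

Lemma wmul_nseq1r s : wmul s (nseq (size s) 1) = s.
Proof. elim: s => [|a s IH] //=. by rewrite wmul_cons IH mulr1. Qed.

Lemma wmul_set_nth s t i e : (i < size s)%N -> (i < size t)%N ->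
  wmul s (set_nth 0 t i e) = set_nth 0 (wmul s t) i (nth 0 s i * e).
Proof.
elim: s t i => [|a s IH] [|b t] [|i] //= Hs Ht; by rewrite wmul_cons IH.
Qed.

Lemma wmul_set_nthl s t i e : (i < size s)%N -> (i < size t)%N ->
  wmul (set_nth 0 s i e) t = set_nth 0 (wmul s t) i (e * nth 0 t i).
Proof.
elim: s t i => [|a s IH] [|b t] [|i] //= Hs Ht; by rewrite wmul_cons IH.
Qed.

Lemma set_nth_catl s1 s2 j e : (j < size s1)%N ->
  set_nth 0 (s1 ++ s2) j e = set_nth 0 s1 j e ++ s2.
Proof. elim: s1 j => [|a s1 IH] [|j] //= H; by rewrite IH. Qed.

Lemma set_nth_catr s1 s2 j e :
  set_nth 0 (s1 ++ s2) (size s1 + j) e = s1 ++ set_nth 0 s2 j e.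
Proof. elim: s1 => [|a s1 IH] //=; by rewrite IH. Qed.

Lemma take_set_nth_lt s i j e : (j < i)%N -> (j < size s)%N ->
  take i (set_nth 0 s j e) = set_nth 0 (take i s) j e.
Proof.
elim: s i j => [|a s IH] [|i] [|j] //= H Hs; by rewrite IH.
Qed.

Lemma take_set_nth_ge s i j e : (i <= j)%N -> (j < size s)%N ->
  take i (set_nth 0 s j e) = take i s.
Proof.
elim: s i j => [|a s IH] [|i] [|j] //= H Hs; by rewrite ?IH.
Qed.

Lemma drop_set_nth_lt s i j e : (j < i)%N -> (j < size s)%N ->
  drop i (set_nth 0 s j e) = drop i s.
Proof.
elim: s i j => [|a s IH] [|i] [|j] //= H Hs; by rewrite ?IH.
Qed.

Lemma drop_set_nth_ge s i j e : (i <= j)%N -> (j < size s)%N ->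
  drop i (set_nth 0 s j e) = set_nth 0 (drop i s) (j - i) e.
Proof.
elim: s i j => [|a s IH] [|i] [|j] //= H Hs; rewrite ?IH ?subn0 //.
Qed.

Lemma take_set_nth_eq s i e : (i < size s)%N -> take i (set_nth 0 s i e) = take i s.
Proof. exact: take_set_nth_ge. Qed.

Lemma drop_set_nth_eq s i e : (i < size s)%N -> drop i.+1 (set_nth 0 s i e) = drop i.+1 s.
Proof. exact: drop_set_nth_lt. Qed.

End Gen.

Section ML.
Variables (R : comPzRingType) (C : algType R) (M : lmodType R).
Implicit Types (s t w : seq C) (x y z : tens C) (e : C) (phi psi : seq C -> M).

Lemma size_set_nth_lt s i e : (i < size s)%N -> size (set_nth 0 s i e) = size s.
Proof. by move=> H; rewrite size_set_nth; apply/maxn_idPr. Qed.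

Lemma ml_ext n phi psi : multilinear n phi ->
  (forall s, size s = n -> phi s = psi s) -> multilinear n psi.
Proof.
move=> H E s i a u v Hs Hi.
by rewrite -!E ?size_set_nth_lt ?Hs //; apply: H.
Qed.

Lemma ml_sum n x (Phi : seq C -> seq C -> M) :
  (forall p, p \in x -> multilinear n (Phi p.2)) ->
  multilinear n (fun s => teval (fun w => Phi w s) x).
Proof.
move=> H s i a u v Hs Hi; apply: teval_lin => p Hp; exact: H.
Qed.

Lemma ml_wmul_l n t phi : size t = n -> multilinear n phi ->
  multilinear n (fun s => phi (wmul t s)).
Proof.
move=> Ht H s i a u v Hs Hi /=.
rewrite !wmul_set_nth ?Ht ?Hs // mulrDr -scalerAr; apply: H => //.
by rewrite size_wmul Ht Hs minnn.
Qed.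

Lemma ml_wmul_r n t phi : size t = n -> multilinear n phi ->
  multilinear n (fun s => phi (wmul s t)).
Proof.
move=> Ht H s i a u v Hs Hi /=.
rewrite !wmul_set_nthl ?Ht ?Hs // mulrDl -scalerAl; apply: H => //.
by rewrite size_wmul Ht Hs minnn.
Qed.

Lemma ml_splice n u v phi : multilinear (size u + n + size v) phi ->
  multilinear n (fun s => phi (u ++ s ++ v)).
Proof.
move=> H s i a u' v' Hs Hi /=.
have := H (u ++ s ++ v) (size u + i)%N a u' v'.
rewrite !set_nth_catr !set_nth_catl ?Hs //; apply.
  by rewrite !size_cat Hs addnA.
lia.
Qed.

Definition tlin n (g : C -> tens C) := forall (N : lmodType R) (phi : seq C -> N),
  multilinear n phi -> forall a u v,
  teval phi (g (a *: u + v)) = a *: teval phi (g u) + teval phi (g v).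

Definition twfall n (g : C -> tens C) := forall c, twf n (g c).

Definition PL i (g : C -> tens C) phi : seq C -> M :=
  fun s => teval (fun w => phi (take i s ++ w ++ drop i.+1 s)) (g (nth 0 s i)).

Lemma twf_size n x p : twf n x -> p \in x -> size p.2 = n.
Proof. by move=> H Hp; apply/eqP; exact: (allP H). Qed.

Lemma ml_PL i m n k g phi : (i < m)%N -> k = (m.-1 + n)%N ->
  twfall n g -> tlin n g -> multilinear k phi -> multilinear m (PL i g phi).
Proof.
move=> Him Hk Hwf Hlin Hphi s j a u v Hs Hj; rewrite /PL.
have [ji|ji] := eqVneq j i.
  subst j; rewrite !nth_set_nth /= eqxx !take_set_nth_eq ?Hs //.
  rewrite !drop_set_nth_eq ?Hs //; apply: Hlin; apply: ml_splice.
  rewrite size_take size_drop Hs Him.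
  by have -> : (i + n + (m - i.+1) = k)%N by rewrite Hk; lia.
have ij : (i == j) = false by apply/negbTE; rewrite eq_sym.
rewrite !nth_set_nth /= ij.
apply: teval_lin => p Hp; have Hw := twf_size (Hwf _) Hp.
have Hsz : forall e, size (take i s ++ p.2 ++ drop i.+1 s) = k.
  by move=> _; rewrite !size_cat size_take size_drop Hs Him Hw Hk; lia.
have [jlt|jgt] := ltnP j i.
  rewrite !take_set_nth_lt ?Hs // !drop_set_nth_lt ?Hs //; try lia.
  rewrite -!set_nth_catl ?size_take ?Hs ?Him //.
  apply: Hphi; first exact: (Hsz u).
  by rewrite Hk; lia.
have jgt' : (i < j)%N by rewrite ltn_neqAle eq_sym ji jgt.
rewrite !take_set_nth_ge ?Hs // ?ltnW //.
rewrite !drop_set_nth_ge ?Hs //.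
rewrite !catA.
have E : forall e, take i s ++ p.2 ++ set_nth 0 (drop i.+1 s) (j - i.+1) e =
    set_nth 0 ((take i s ++ p.2) ++ drop i.+1 s) (size (take i s ++ p.2) + (j - i.+1)) e.
  by move=> e; rewrite set_nth_catr catA.
rewrite -!catA !E; apply: Hphi.
  by rewrite -catA; exact: (Hsz u).
rewrite size_cat size_take Hs Him Hw Hk; lia.
Qed.

End ML.

Section Delta.
Variables (R : comPzRingType) (C : algType R) (Delta : C -> tens C) (eps : C -> R).
Hypothesis HB : is_bialgebra Delta eps.
Implicit Types (s t w : seq C) (x y z : tens C) (e : C).

Local Notation D := (deltan Delta eps).

Lemma teval_seq1 (M : lmodType R) (phi : seq C -> M) r w :
  teval phi [:: (r, w)] = r *: phi w.
Proof. by rewrite /teval big_cons big_nil addr0. Qed.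

Lemma teval_exch (M : lmodType R) (F : seq C -> seq C -> M) x y :
  teval (fun v => teval (fun u => F u v) x) y =
  teval (fun u => teval (fun v => F u v) y) x.
Proof.
rewrite /teval; under eq_bigr do rewrite scaler_sumr.
rewrite exchange_big /=; apply: eq_bigr => p _; rewrite scaler_sumr.
by apply: eq_bigr => q _; rewrite !scalerA mulrC.
Qed.

Lemma size2 w : size w = 2%N -> w = [:: nth 0 w 0; nth 0 w 1].
Proof. by case: w => [|a [|b [|]]]. Qed.

Lemma Dwf2 : twfall 2 Delta.
Proof. by case: HB => [[[H _] _] _ _ _ _]. Qed.

Lemma Dlin2 : tlin 2 Delta.
Proof.
case: HB => [[[_ H] _] _ _ _ _] N phi Hphi a u v.
by rewrite (H a u v N phi Hphi) teval_cat teval_scal.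
Qed.

Lemma eps_lin a u v : eps (a *: u + v) = a * eps u + eps v.
Proof. by case: HB => [[_ H] _ _ _ _]. Qed.

Lemma eps_mul a b : eps (a * b) = eps a * eps b.
Proof. by case: HB => [_ _ _ _ [H _]]. Qed.

Lemma eps1 : eps 1 = 1.
Proof. by case: HB => [_ _ _ _ [_ H]]. Qed.

Lemma Dmul2 (M : lmodType R) (phi : seq C -> M) a b : multilinear 2 phi ->
  teval phi (Delta (a * b)) =
  teval (fun u => teval (fun v => phi (wmul u v)) (Delta b)) (Delta a).
Proof.
case: HB => [_ _ _ [H _] _] Hphi; rewrite (H a b M phi Hphi).
by rewrite teval_flat.
Qed.

Lemma Done (M : lmodType R) (phi : seq C -> M) : multilinear 2 phi ->
  teval phi (Delta 1) = phi [:: 1; 1].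
Proof.
case: HB => [_ _ _ [_ H] _] Hphi; rewrite (H M phi Hphi).
by rewrite teval_seq1 scale1r.
Qed.

Lemma coass (M : lmodType R) (phi : seq C -> M) c : multilinear 3 phi ->
  teval (fun w => teval (fun q => phi [:: nth 0 q 0; nth 0 q 1; nth 0 w 1])
     (Delta (nth 0 w 0))) (Delta c) =
  teval (fun w => teval (fun q => phi [:: nth 0 w 0; nth 0 q 0; nth 0 q 1])
     (Delta (nth 0 w 1))) (Delta c).
Proof.
case: HB => [_ H _ _ _] Hphi; have := H c M phi Hphi.
rewrite /CE_circ !teval_flat => E.
transitivity (\sum_(p <- Delta c) p.1 *: \sum_(q <- Delta (nth 0 p.2 0)) q.1 *:
     phi (take 0 p.2 ++ q.2 ++ drop 1 p.2)).
  apply: eq_big_seq => p Hp; congr (_ *: _).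
  apply: eq_big_seq => q Hq; congr (_ *: _).
  rewrite (size2 (twf_size (Dwf2 _) Hp)) (size2 (twf_size (Dwf2 _) Hq)) //.
rewrite E; apply: eq_big_seq => p Hp; congr (_ *: _).
apply: eq_big_seq => q Hq; congr (_ *: _).
by rewrite (size2 (twf_size (Dwf2 _) Hp)) (size2 (twf_size (Dwf2 _) Hq)).
Qed.

Lemma counitL (M : lmodType R) (phi : seq C -> M) c : multilinear 1 phi ->
  teval (fun w => eps (nth 0 w 0) *: phi [:: nth 0 w 1]) (Delta c) = phi [:: c].
Proof.
case: HB => [_ _ [H _] _ _] Hphi; have := H c M phi Hphi.
rewrite /CE_circ /CE_id teval_flat teval_seq1 scale1r => <-.
apply: eq_big_seq => p Hp; rewrite big_cons big_nil addr0 /=.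
by rewrite (size2 (twf_size (Dwf2 _) Hp)).
Qed.

Lemma counitR (M : lmodType R) (phi : seq C -> M) c : multilinear 1 phi ->
  teval (fun w => eps (nth 0 w 1) *: phi [:: nth 0 w 0]) (Delta c) = phi [:: c].
Proof.
case: HB => [_ _ [_ H] _ _] Hphi; have := H c M phi Hphi.
rewrite /CE_circ /CE_id teval_flat teval_seq1 scale1r => <-.
apply: eq_big_seq => p Hp; rewrite big_cons big_nil addr0 /=.
by rewrite (size2 (twf_size (Dwf2 _) Hp)).
Qed.


Lemma D_wf n : twfall n (D n).
Proof.
case: n => [|n] c //=.
elim: n c => [|n IH] c //=.
apply/allP => r /flattenP [l /mapP [p Hp ->]] /mapP [q Hq ->] /=.
by rewrite eqSS; apply/eqP; exact: (twf_size (IH _) Hq).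
Qed.

Lemma DS (M : lmodType R) (phi : seq C -> M) k c :
  teval phi (D k.+2 c) =
  teval (fun w => teval (fun t => phi (nth 0 w 0 :: t)) (D k.+1 (nth 0 w 1))) (Delta c).
Proof. by rewrite /= teval_flat. Qed.

Lemma DSml (M : lmodType R) (phi : seq C -> M) k : tlin k.+1 (D k.+1) ->
  multilinear k.+2 phi ->
  multilinear 2 (fun w => teval (fun t => phi (nth 0 w 0 :: t)) (D k.+1 (nth 0 w 1))).
Proof.
move=> Hl Hphi; apply: (ml_ext (ml_PL (i:=1) (m:=2) (n:=k.+1) (k := k.+2) _ _ (D_wf k.+1) Hl Hphi)) => //.
move=> w /size2 ->; rewrite /PL /=; apply: teval_ext => p _; by rewrite cats0.
Qed.

Lemma D_lin n : tlin n (D n).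
Proof.
elim: n => [|[|k] IH] N phi Hphi a u v.
- by rewrite /= !teval_seq1 eps_lin scalerDl scalerA.
- rewrite /= !teval_seq1 !scale1r.
  by have := Hphi [:: 0] 0%N a u v erefl erefl.
- by rewrite !DS; apply: Dlin2; apply: DSml.
Qed.

Lemma ml_head (M : lmodType R) (phi : seq C -> M) n e : multilinear n.+1 phi ->
  multilinear n (fun t => phi (e :: t)).
Proof.
move=> H; apply: (ml_ext (ml_splice (u := [:: e]) (v := [::]) (phi := phi) _)).
  by rewrite /= addn0 add1n.
by move=> t _; rewrite cats0.
Qed.

Lemma ml_lin1 (M : lmodType R) (F : C -> M) :
  (forall a u v, F (a *: u + v) = a *: F u + F v) ->
  multilinear 1 (fun s => F (nth 0 s 0)).
Proof.
move=> H s i a u v Hs; case: i => // _; by case: s Hs => [|c [|]] //= _; rewrite H.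
Qed.

Lemma DL (M : lmodType R) (phi : seq C -> M) n j c : multilinear (n + j) phi ->
  teval phi (D (n + j) c) =
  teval (fun w => teval (fun u => teval (fun v => phi (u ++ v)) (D j (nth 0 w 1)))
        (D n (nth 0 w 0))) (Delta c).
Proof.
elim: n j c phi => [|[|n] IH] j c phi Hphi.
- rewrite add0n in Hphi *.
  rewrite -(counitL c (ml_lin1 (F := fun c => teval phi (D j c)) _)); last first.
    by move=> a u v; apply: D_lin.
  apply: teval_ext => p _ /=; by rewrite teval_seq1.
- case: j Hphi => [|j] Hphi.
    rewrite [D (1 + 0) c]/= teval_seq1 scale1r -(counitR c (phi := phi)) //=.
    apply: teval_ext => p _ /=; by rewrite !teval_seq1 scale1r.
  rewrite [(1 + j.+1)%N]/= DS; apply: teval_ext => p _ /=.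
  by rewrite teval_seq1 scale1r.
- have -> : (n.+2 + j = (n + j).+2)%N by rewrite !addSn.
  rewrite DS.
  transitivity (teval (fun w => teval (fun w' =>
     teval (fun u => teval (fun v => phi (nth 0 w 0 :: u ++ v)) (D j (nth 0 w' 1)))
       (D n.+1 (nth 0 w' 0))) (Delta (nth 0 w 1))) (Delta c)).
    apply: teval_ext => p _; rewrite -addSn; apply: IH.
    by apply: ml_head; rewrite -addSn.
  symmetry; transitivity (teval (fun w => teval (fun w' => teval (fun u =>
     teval (fun v => phi (nth 0 w' 0 :: u ++ v)) (D j (nth 0 w 1)))
       (D n.+1 (nth 0 w' 1))) (Delta (nth 0 w 0))) (Delta c)).
    by apply: teval_ext => p _; rewrite DS.
  set G := fun a b d => teval (fun u => teval (fun v => phi (a :: u ++ v)) (D j d))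
      (D n.+1 b).
  have := coass c (phi := fun s => G (nth 0 s 0) (nth 0 s 1) (nth 0 s 2)).
  rewrite /G /= => ->; first by [].
  apply: (ml_ext (ml_PL (i := 1) (m := 3) (n := n.+1) (k := n.+3) _ _ (D_wf _) (@D_lin _)
     (ml_PL (i := n.+2) (m := n.+3) (n := j) (k := (n.+2 + j)%N) _ _ (D_wf _) (@D_lin _) Hphi))) => //.
  move=> s Hs; rewrite (_ : s = [:: nth 0 s 0; nth 0 s 1; nth 0 s 2]); last first.
    by case: s Hs => [|a [|b [|d [|]]]].
  rewrite /PL /=; apply: teval_ext => p Hp.
  have Hw : size p.2 = n.+1 := twf_size (D_wf n.+1 _) Hp.
  rewrite -{1}Hw take_size_cat // drop_oversize ?size_cat ?Hw //.
  rewrite nth_cat Hw ltnn subnn /=.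
  by apply: teval_ext => q _; rewrite cats0.
by rewrite addn1.
Qed.


Lemma DH (M : lmodType R) (psi : seq C -> M) k n c : multilinear (n + k) psi ->
  teval (PL 0 (D n) psi) (D k.+1 c) = teval psi (D (n + k) c).
Proof.
case: k => [|k] H.
  rewrite addn0 [D 1 c]/= teval_seq1 scale1r /PL /=.
  by apply: teval_ext => p _; rewrite cats0.
rewrite DS (DL c H); apply: teval_ext => p _.
rewrite -teval_exch; apply: teval_ext => q _.
by rewrite /PL /= drop0.
Qed.

Lemma ml_PLD (M : lmodType R) (phi : seq C -> M) i k n :
  multilinear (i + (n + k)) phi -> multilinear (i + k.+1) (PL i (D n) phi).
Proof.
move=> H; apply: (ml_PL (k := (i + (n + k))%N) _ _ (D_wf n) (@D_lin n) H).
  by rewrite -addSnnS leq_addr.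
lia.
Qed.

Lemma ml_pre (M : lmodType R) (phi : seq C -> M) u n :
  multilinear (size u + n) phi -> multilinear n (fun v => phi (u ++ v)).
Proof.
move=> H; apply: (ml_ext (ml_splice (u := u) (v := [::]) (phi := phi) _)).
  by rewrite addn0.
by move=> t _; rewrite cats0.
Qed.

Lemma Dc (M : lmodType R) (phi : seq C -> M) i k n c :
  multilinear (i + (n + k)) phi ->
  teval phi (D (i + (n + k)) c) = teval (PL i (D n) phi) (D (i + k.+1) c).
Proof.
move=> H; rewrite (DL c H) (DL c (ml_PLD H)).
apply: teval_ext => p _; apply: teval_ext => u Hu.
have Hs : size u.2 = i := twf_size (D_wf _ _) Hu.
rewrite -DH; last by apply: ml_pre; rewrite Hs.
apply: teval_ext => v Hv; rewrite /PL /=.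
rewrite take_size_cat // drop_cat nth_cat Hs ltnn subnn ltnNge leqnSn /= subSnn take0.
done.
Qed.

Lemma Dmul (M : lmodType R) (phi : seq C -> M) n a b : multilinear n phi ->
  teval phi (D n (a * b)) =
  teval (fun u => teval (fun v => phi (wmul u v)) (D n b)) (D n a).
Proof.
elim: n a b phi => [|[|k] IH] a b phi Hphi.
- by rewrite /= !teval_seq1 eps_mul scalerA.
- by rewrite /= !teval_seq1 !scale1r.
rewrite DS (Dmul2 _ _ (DSml (@D_lin _) Hphi)) DS.
apply: teval_ext => p Hp.
transitivity (teval (fun t => teval (fun q => teval (fun t' =>
    phi (wmul (nth 0 p.2 0 :: t) (nth 0 q 0 :: t'))) (D k.+1 (nth 0 q 1))) (Delta b))
    (D k.+1 (nth 0 p.2 1))); last by apply: teval_ext => t _; rewrite DS.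
rewrite teval_exch; apply: teval_ext => q Hq.
rewrite (size2 (twf_size (Dwf2 _) Hp)) (size2 (twf_size (Dwf2 _) Hq)) /=.
by rewrite IH //; apply: ml_head.
Qed.

Lemma Dunit (M : lmodType R) (phi : seq C -> M) n : multilinear n phi ->
  teval phi (D n 1) = phi (nseq n 1).
Proof.
elim: n phi => [|[|k] IH] phi Hphi.
- by rewrite /= teval_seq1 eps1 scale1r.
- by rewrite /= teval_seq1 scale1r.
rewrite DS (Done (DSml (@D_lin _) Hphi)) /= IH //; exact: ml_head.
Qed.

Lemma D2E (M : lmodType R) (psi : seq C -> M) v :
  teval psi (D 2 v) = teval psi (Delta v).
Proof.
rewrite [D 2 v]/= /teval big_flatten big_map; apply: eq_big_seq => p Hp.
rewrite big_seq1 /= mulr1.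
by rewrite {3}(size2 (twf_size (Dwf2 _) Hp)).
Qed.

End Delta.

Section Ext.
Variables (R : comPzRingType) (C : algType R) (Delta : C -> tens C) (eps : C -> R).
Hypothesis HB : is_bialgebra Delta eps.
Implicit Types (s t w : seq C) (x y z : tens C) (e : C) (f g : C -> tens C).

Local Notation D := (deltan Delta eps).
Local Notation OCo := (OC_op Delta eps).
Local Notation CEo := (CE_op Delta).
Local Notation mu := [:: ((1 : R), [:: (1 : C); 1])].

Let DwfE n : twfall n (D n) := D_wf Delta eps n.
Let DlinE n : tlin n (D n) := @D_lin _ _ _ _ HB n.

Lemma ext_teval (M : lmodType R) (phi : seq C -> M) K x c :
  teval phi (ext Delta eps K x c) =
  teval (fun w => teval (fun d => phi (wmul d w)) (D K c)) x.
Proof. by rewrite /ext teval_flat. Qed.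

Lemma ext_teval' (M : lmodType R) (phi : seq C -> M) K x c :
  teval phi (ext Delta eps K x c) =
  teval (fun d => teval (fun w => phi (wmul d w)) x) (D K c).
Proof. by rewrite ext_teval teval_exch. Qed.

Lemma ext_teq n x y : teq n x y -> heq n (ext Delta eps n x) (ext Delta eps n y).
Proof.
move=> H c M phi Hphi; rewrite !ext_teval; apply: H.
apply: ml_sum => p Hp; apply: ml_wmul_l Hphi.
exact: twf_size (DwfE _ _) Hp.
Qed.

Lemma ext_wf n x : twf n x -> twfall n (ext Delta eps n x).
Proof.
move=> Hx c; apply/allP => r /flattenP [l /mapP [p Hp ->]] /mapP [q Hq ->] /=.
by rewrite size_wmul (twf_size (DwfE _ _) Hq) (twf_size Hx Hp) minnn.
Qed.

Lemma ext_lin n x : twf n x -> tlin n (ext Delta eps n x).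
Proof.
move=> Hx M phi Hphi a u v; rewrite !ext_teval'; apply: DlinE.
apply: ml_sum => p Hp; apply: ml_wmul_r Hphi.
exact: twf_size Hx Hp.
Qed.

Lemma ext_thom n x : twf n x -> thom n (ext Delta eps n x).
Proof.
move=> Hx; split; first exact: ext_wf.
move=> a u v M phi Hphi; rewrite teval_cat teval_scal; exact: ext_lin.
Qed.

Lemma thom_wf n g : thom n g -> twfall n g.
Proof. by case. Qed.

Lemma thom_lin n g : thom n g -> tlin n g.
Proof.
case=> _ H M phi Hphi a u v.
by rewrite (H a u v M phi Hphi) teval_cat teval_scal.
Qed.

Lemma OC_teval (M : lmodType R) (psi : seq C -> M) i x y :
  teval psi (OC_circ Delta eps i x y) =
  teval (fun w => teval (fun v => teval (fun t =>
     psi (take i.-1 w ++ wmul t v ++ drop i w)) (D (size v) (nth 0 w i.-1))) y) x.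
Proof.
rewrite /OC_circ /teval big_flatten big_map; apply: eq_bigr => p _.
rewrite big_flatten big_map scaler_sumr; apply: eq_bigr => q _.
rewrite big_map !scaler_sumr; apply: eq_bigr => t _.
by rewrite !scalerA.
Qed.

Lemma CE_teval (M : lmodType R) (psi : seq C -> M) i f g c :
  teval psi (CE_circ i.+1 f g c) = teval (PL i g psi) (f c).
Proof. by rewrite /CE_circ teval_flat. Qed.

Lemma nth_wmul s t i : (i < size s)%N -> (i < size t)%N ->
  nth 0 (wmul s t) i = nth 0 s i * nth 0 t i.
Proof. elim: s t i => [|a s IH] [|b t] [|i] //= Hs Ht; exact: IH. Qed.

Lemma swap4 (M : lmodType R) (F : seq C -> seq C -> seq C -> seq C -> M)
   (E Q T : tens C) (Lf : seq C -> tens C) :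
  teval (fun ee => teval (fun ff => teval (fun tt => teval (fun qq => F ee ff tt qq) Q) T) (Lf ee)) E =
  teval (fun qq => teval (fun tt => teval (fun ee => teval (fun ff => F ee ff tt qq) (Lf ee)) E) T) Q.
Proof.
transitivity (teval (fun ee => teval (fun ff => teval (fun qq => teval (fun tt => F ee ff tt qq) T) Q) (Lf ee)) E).
  by apply: teval_ext => ee _; apply: teval_ext => ff _; rewrite teval_exch.
transitivity (teval (fun ee => teval (fun qq => teval (fun ff => teval (fun tt => F ee ff tt qq) T) (Lf ee)) Q) E).
  by apply: teval_ext => ee _; rewrite teval_exch.
rewrite teval_exch; apply: teval_ext => qq _.
transitivity (teval (fun ee => teval (fun tt => teval (fun ff => F ee ff tt qq.2) (Lf ee)) T) E).
  by apply: teval_ext => ee _; rewrite teval_exch.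
by rewrite teval_exch.
Qed.


Lemma wmul_splice i s1 s2 u t (q : seq C) : size s1 = size s2 -> (i < size s1)%N ->
  size u = size t -> size q = size t ->
  wmul (take i s1 ++ u ++ drop i.+1 s1) (take i s2 ++ wmul t q ++ drop i.+1 s2) =
  take i (wmul s1 s2) ++ wmul (wmul u t) q ++ drop i.+1 (wmul s1 s2).
Proof.
move=> H1 Hi Hu Hq.
rewrite wmul_cat; last by rewrite !size_take -H1 Hi.
rewrite wmul_cat; last by rewrite size_wmul Hu Hq minnn.
by rewrite wmul_take wmul_drop wmulA.
Qed.

Lemma ext_circ i k n x y : twf (i + k.+1) x -> twf n y ->
  heq (i + (n + k)) (ext Delta eps (i + (n + k)) (OC_circ Delta eps i.+1 x y))
      (CE_circ i.+1 (ext Delta eps (i + k.+1) x) (ext Delta eps n y)).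
Proof.
move=> Hx Hy c M phi Hphi.
have Him : (i < i + k.+1)%N by rewrite -addSnnS leq_addr.
rewrite ext_teval OC_teval CE_teval ext_teval'.
transitivity (teval (fun p => teval (fun q => teval (fun t => teval (fun ee => teval (fun ff =>
    phi (wmul (take i ee ++ ff ++ drop i.+1 ee) (take i p ++ wmul t q ++ drop i.+1 p)))
    (D n (nth 0 ee i))) (D (i + k.+1) c)) (D n (nth 0 p i))) y) x).
  apply: teval_ext => p Hp; apply: teval_ext => q Hq.
  rewrite (twf_size Hy Hq) /=.
  apply: teval_ext => t Ht.
  rewrite (Dc HB c) //.
  apply: ml_wmul_r Hphi.
  rewrite !size_cat size_take size_drop size_wmul (twf_size Hx Hp) Him.
  rewrite (twf_size (DwfE _ _) Ht) (twf_size Hy Hq) minnn; lia.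
symmetry.
transitivity (teval (fun ee => teval (fun p => teval (fun ff => teval (fun t => teval (fun q =>
    phi (take i (wmul ee p) ++ wmul (wmul ff t) q ++ drop i.+1 (wmul ee p))) y)
    (D n (nth 0 p i))) (D n (nth 0 ee i))) x) (D (i + k.+1) c)).
  apply: teval_ext => ee He; apply: teval_ext => p Hp.
  rewrite /PL ext_teval' nth_wmul ?(twf_size (DwfE _ _) He) ?(twf_size Hx Hp) //.
  rewrite (Dmul HB) //.
  apply: ml_sum => q Hq.
  apply: (ml_wmul_r (phi := fun s => phi (take i (wmul ee.2 p.2) ++ s ++ drop i.+1 (wmul ee.2 p.2)))).
    exact: twf_size Hy Hq.
  apply: ml_splice.
  rewrite size_take size_drop size_wmul (twf_size (DwfE _ _) He) (twf_size Hx Hp) minnn Him.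
  by have -> : (i + n + (i + k.+1 - i.+1) = i + (n + k))%N by lia.
rewrite teval_exch; apply: teval_ext => p Hp.
rewrite swap4; apply: teval_ext => q Hq; apply: teval_ext => t Ht.
apply: teval_ext => ee He; apply: teval_ext => ff Hf.
rewrite wmul_splice //.
- by rewrite (twf_size (DwfE _ _) He) (twf_size Hx Hp).
- by rewrite (twf_size (DwfE _ _) He).
- by rewrite (twf_size (DwfE _ _) Hf) (twf_size (DwfE _ _) Ht).
- by rewrite (twf_size Hy Hq) (twf_size (DwfE _ _) Ht).
Qed.

End Ext.

Section Ops.
Variables (R : comPzRingType) (C : algType R) (Delta : C -> tens C) (eps : C -> R).
Hypothesis HB : is_bialgebra Delta eps.
Implicit Types (s t w : seq C) (x y z : tens C) (e : C) (f g : C -> tens C).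

Local Notation D := (deltan Delta eps).
Local Notation OCo := (OC_op Delta eps).
Local Notation CEo := (CE_op Delta).
Local Notation mu := [:: ((1 : R), [:: (1 : C); 1])].
Local Notation ext := (ext Delta eps).

Let DwfE n : twfall n (D n) := D_wf Delta eps n.
Let DlinE n : tlin n (D n) := @D_lin _ _ _ _ HB n.

Lemma heq_trans n f g h : heq n f g -> heq n g h -> heq n f h.
Proof. by move=> H1 H2 c; apply: teq_trans (H1 c) (H2 c). Qed.
Lemma heq_sym n f g : heq n f g -> heq n g f.
Proof. by move=> H c; apply: teq_sym. Qed.

Lemma ext_circ' i m n K x y : twf m x -> twf n y -> (i < m)%N -> K = (m.-1 + n)%N ->
  heq K (ext K (OC_circ Delta eps i.+1 x y)) (CE_circ i.+1 (ext m x) (ext n y)).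
Proof.
move=> Hx Hy Him HK.
have [k Em] : exists k, m = (i + k.+1)%N by exists (m - i.+1)%N; lia.
subst m K.
have -> : ((i + k.+1).-1 + n = i + (n + k))%N by lia.
exact: ext_circ.
Qed.

Lemma ext_mu : heq 2 (ext 2 mu) Delta.
Proof.
move=> c M phi Hphi; rewrite ext_teval' D2E //; apply: teval_ext => p Hp.
rewrite teval_seq1 scale1r.
have Hs := twf_size (Dwf2 HB _) Hp; by rewrite -[in RHS](wmul_nseq1r p.2) Hs.
Qed.

Lemma twf_mu : twf 2 mu. Proof. by []. Qed.

Lemma CEc1 i m k f f' g : heq m f f' -> thom k g -> (i < m)%N ->
  heq (m.-1 + k) (CE_circ i.+1 f g) (CE_circ i.+1 f' g).
Proof.
move=> H Hg Him c M phi Hphi; rewrite !CE_teval; apply: H.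
exact: ml_PL Him erefl (thom_wf Hg) (thom_lin Hg) Hphi.
Qed.

Lemma CEc2 i m k f g g' : twfall m f -> heq k g g' -> (i < m)%N ->
  heq (m.-1 + k) (CE_circ i.+1 f g) (CE_circ i.+1 f g').
Proof.
move=> Hf H Him c M phi Hphi; rewrite !CE_teval; apply: teval_ext => p Hp.
rewrite /PL; apply: H; apply: ml_splice.
rewrite size_take size_drop (twf_size (Hf _) Hp) Him.
by have -> : (i + k + (m - i.+1) = m.-1 + k)%N by lia.
Qed.

Lemma ev_osum_sgn (F : nat -> C -> tens C) (B : nat -> bool) (s : seq nat) c :
  osum CEo (fun i => osgn CEo (B i) (F i)) s c =
  osum OCo (fun i => osgn OCo (B i) (F i c)) s.
Proof. by elim: s => [|i s IH] //=; rewrite IH; case: (B i). Qed.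

Lemma ev_osgn b f c : osgn CEo b f c = osgn OCo b (f c).
Proof. by case: b. Qed.

Lemma ext_cat K x y c : ext K (x ++ y) c = ext K x c ++ ext K y c.
Proof. by rewrite /ext map_cat flatten_cat. Qed.

Lemma teval_ext_neg (M : lmodType R) (phi : seq C -> M) K x c :
  teval phi (ext K (tneg x) c) = teval phi (tneg (ext K x c)).
Proof. by rewrite teval_neg !ext_teval teval_neg. Qed.

Lemma ext_osgn K b x c : teq K (ext K (osgn OCo b x) c) (osgn OCo b (ext K x c)).
Proof. case: b => M phi _ //=; exact: teval_ext_neg. Qed.

Lemma teq_osgn n b x y : teq n x y -> teq n (osgn OCo b x) (osgn OCo b y).
Proof. by case: b => H //=; apply: teq_neg. Qed.

Lemma teq_osum_sgn n (F G : nat -> tens C) (B : nat -> bool) (s : seq nat) :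
  (forall i, i \in s -> teq n (F i) (G i)) ->
  teq n (osum OCo (fun i => osgn OCo (B i) (F i)) s)
        (osum OCo (fun i => osgn OCo (B i) (G i)) s).
Proof.
elim: s => [|i s IH] H //=.
apply: teq_cat; first by apply: teq_osgn; apply: H; rewrite inE eqxx.
by apply: IH => j Hj; apply: H; rewrite inE Hj orbT.
Qed.

Lemma ext_osum_sgn K (F : nat -> tens C) (B : nat -> bool) (s : seq nat) c :
  teq K (ext K (osum OCo (fun i => osgn OCo (B i) (F i)) s) c)
        (osum OCo (fun i => osgn OCo (B i) (ext K (F i) c)) s).
Proof.
elim: s => [|i s IH] //=; rewrite ext_cat.
by apply: teq_cat => //; apply: ext_osgn.
Qed.


Lemma ext_circ_mul i n x : twf n x -> (i < 2)%N ->
  heq n.+1 (ext n.+1 (OC_circ Delta eps i.+1 mu x)) (CE_circ i.+1 Delta (ext n x)).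
Proof.
move=> Hx Hi; apply: heq_trans (ext_circ' twf_mu Hx Hi erefl) _.
exact: CEc1 ext_mu (ext_thom HB Hx) Hi.
Qed.

Lemma ext_circ_mur i n x : twf n x -> (i < n)%N ->
  heq n.+1 (ext n.+1 (OC_circ Delta eps i.+1 x mu)) (CE_circ i.+1 (ext n x) Delta).
Proof.
move=> Hx Hi; have E : (n.-1 + 2 = n.+1)%N by lia.
apply: heq_trans (ext_circ' Hx twf_mu Hi (esym E)) _.
have := CEc2 (thom_wf (ext_thom HB Hx)) ext_mu Hi; by rewrite E.
Qed.

Lemma ext_odiff n x : twf n x ->
  heq n.+1 (ext n.+1 (odiff OCo n x)) (odiff CEo n (ext n x)).
Proof.
move=> Hx c; rewrite /odiff /=.
rewrite (ext_cat _ (OC_circ _ _ 2 _ _)) (ext_cat _ (osum _ _ _)) ev_osum_sgn ev_osgn.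
apply: teq_cat; first exact: (ext_circ_mul (i := 1) Hx erefl c).
apply: teq_cat.
  apply: teq_trans; first exact: ext_osum_sgn.
  apply: teq_osum_sgn => i; rewrite mem_iota => /andP [H1 H2].
  case: i H1 H2 => [|i] // _ H2.
  by apply: ext_circ_mur => //; rewrite add1n ltnS in H2.
apply: teq_trans; first exact: ext_osgn.
by apply: teq_osgn; exact: (ext_circ_mul (i := 0) Hx erefl c).
Qed.


Lemma ext_at1 n x : twf n x -> teq n (ext n x 1) x.
Proof.
move=> Hx M phi Hphi; rewrite ext_teval; apply: teval_ext => p Hp.
rewrite (Dunit HB); last by apply: ml_wmul_r Hphi; exact: twf_size Hx Hp.
by rewrite -(twf_size Hx Hp) wmul_nseq1l.
Qed.

Lemma at1_a k g : thom k g ->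
  teq k.+1 (CE_circ 2 Delta g 1) (OC_circ Delta eps 2 mu (g 1)).
Proof.
move=> Hg M phi Hphi; rewrite CE_teval OC_teval (Done HB); last first.
  exact: (ml_PL (m := 2) (n := k) _ erefl (thom_wf Hg) (thom_lin Hg) Hphi).
rewrite teval_seq1 scale1r /PL /=; apply: teval_ext => v Hv.
have Hs := twf_size (thom_wf Hg _) Hv.
rewrite Hs (Dunit HB) -?Hs ?wmul_nseq1l //.
apply: (ml_wmul_r (phi := fun s => phi (1 :: s ++ [::]))) => //.
apply: (ml_splice (u := [:: 1]) (v := [::])); by rewrite /= Hs addn0 add1n.
Qed.

Lemma at1_c k g : thom k g ->
  teq k.+1 (CE_circ 1 Delta g 1) (OC_circ Delta eps 1 mu (g 1)).
Proof.
move=> Hg M phi Hphi; rewrite CE_teval OC_teval (Done HB); last first.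
  exact: (ml_PL (m := 2) (n := k) _ erefl (thom_wf Hg) (thom_lin Hg) Hphi).
rewrite teval_seq1 scale1r /PL /=; apply: teval_ext => v Hv.
have Hs := twf_size (thom_wf Hg _) Hv.
rewrite Hs (Dunit HB) -?Hs ?wmul_nseq1l //.
apply: (ml_wmul_r (phi := fun s => phi ([::] ++ s ++ [:: 1]))) => //.
apply: (ml_splice (u := [::]) (v := [:: 1])); by rewrite /= Hs addn1.
Qed.

Lemma at1_b i k g : thom k g -> (i < k)%N ->
  teq k.+1 (CE_circ i.+1 g Delta 1) (OC_circ Delta eps i.+1 (g 1) mu).
Proof.
move=> Hg Hi M phi Hphi; rewrite CE_teval OC_teval; apply: teval_ext => w Hw.
rewrite teval_seq1 scale1r /PL (D2E HB) /=; apply: teval_ext => t Ht.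
have Hs := twf_size (Dwf2 HB _) Ht.
by rewrite -{1}(wmul_nseq1r t.2) Hs.
Qed.

Lemma odiff_at1 k g : thom k g ->
  teq k.+1 (odiff CEo k g 1) (odiff OCo k (g 1)).
Proof.
move=> Hg; rewrite /odiff /= ev_osum_sgn ev_osgn.
apply: teq_cat; first exact: at1_a.
apply: teq_cat; last by apply: teq_osgn; exact: at1_c.
apply: teq_osum_sgn => i; rewrite mem_iota => /andP [H1 H2].
case: i H1 H2 => [|i] // _ H2.
by apply: at1_b => //; rewrite add1n ltnS in H2.
Qed.

End Ops.

Section Fin.
Variables (R : comPzRingType) (C : algType R) (Delta : C -> tens C) (eps : C -> R).
Implicit Types (s t w : seq C) (x y z : tens C) (e : C) (f g : C -> tens C).

Local Notation OCo := (OC_op Delta eps).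
Local Notation CEo := (CE_op Delta).

Lemma twf_OC i m n x y : twf m x -> twf n y -> (i < m)%N ->
  twf (m.-1 + n) (OC_circ Delta eps i.+1 x y).
Proof.
move=> Hx Hy Hi; apply/allP => r /flattenP [l /mapP [p Hp ->]].
move=> /flattenP [l' /mapP [q Hq ->]] /mapP [t Ht ->] /=.
rewrite (twf_size Hy Hq) in Ht.
rewrite !size_cat size_take size_drop size_wmul (twf_size Hx Hp) Hi.
rewrite (twf_size Hy Hq) (twf_size (D_wf Delta eps _ _) Ht) minnn.
apply/eqP; lia.
Qed.

Lemma teval_osum_nil (M : lmodType R) (phi : seq C -> M) (B : nat -> bool) (s : seq nat) :
  teval phi (osum OCo (fun i => osgn OCo (B i) [::]) s) = 0.
Proof.
elim: s => [|i s IH] /=; first exact: teval_nil.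
by rewrite teval_cat IH addr0; case: (B i) => /=; rewrite ?teval_neg teval_nil ?oppr0.
Qed.

Lemma teval_circ_nil (M : lmodType R) (phi : seq C -> M) i f c :
  teval phi (CE_circ i.+1 f (fun _ => [::]) c) = 0.
Proof. by rewrite CE_teval /PL /teval big1 // => p _; rewrite big_nil scaler0. Qed.

Lemma odiff_zero (M : lmodType R) (phi : seq C -> M) k c :
  teval phi (odiff CEo k (fun _ => [::]) c) = 0.
Proof.
rewrite /odiff /= (ev_osum_sgn Delta eps) (ev_osgn Delta eps) !teval_cat teval_circ_nil.
rewrite (teval_osum_nil _ odd); case: (~~ odd k) => /=;
  by rewrite ?teval_neg teval_circ_nil ?oppr0 !add0r.
Qed.

Lemma cobound_of_heq K f g : heq K f g ->
  CE_cobound Delta K (oadd CEo f (oneg CEo g)).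
Proof.
case: K => [|k] H.
  move=> c M phi Hphi /=.
  by rewrite teval_cat teval_neg (H c M phi Hphi) subrr teval_nil.
exists (fun _ => [::]); split.
  split=> // a u v N phi _; by rewrite teval_cat teval_scal !teval_nil addr0 scaler0.
move=> c M phi Hphi /=.
by rewrite teval_cat teval_neg (H c M phi Hphi) subrr odiff_zero.
Qed.

End Fin.

Section Br.
Variables (R : comPzRingType) (C : algType R) (Delta : C -> tens C) (eps : C -> R).
Hypothesis HB : is_bialgebra Delta eps.
Local Notation OCo := (OC_op Delta eps).
Local Notation CEo := (CE_op Delta).
Local Notation ext := (ext Delta eps).

Lemma ext_bracket m n x y : twf m x -> twf n y ->
  heq (m + n).-1 (ext (m + n).-1 (obracket OCo m n x y))
      (obracket CEo m n (ext m x) (ext n y)).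
Proof.
move=> Hx Hy c; rewrite /obracket /obar /=.
rewrite ext_cat !(ev_osgn Delta eps) !(ev_osum_sgn Delta eps).
apply: teq_cat.
  apply: teq_trans; first exact: ext_osgn.
  apply: teq_osgn; apply: teq_trans; first exact: ext_osum_sgn.
  apply: teq_osum_sgn => i; rewrite mem_iota => /andP [H1 H2].
  case: i H1 H2 => [|i] // _ H2; rewrite add1n ltnS in H2.
  by apply: (ext_circ' HB) => //; lia.
apply: teq_trans; first by move=> M phi _; exact: teval_ext_neg.
apply: teq_neg; apply: teq_trans; first exact: ext_osgn.
apply: teq_osgn; apply: teq_trans; first exact: ext_osgn.
apply: teq_osgn; apply: teq_trans; first exact: ext_osum_sgn.
apply: teq_osum_sgn => i; rewrite mem_iota => /andP [H1 H2].
case: i H1 H2 => [|i] // _ H2; rewrite add1n ltnS in H2.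
by apply: (ext_circ' HB) => //; lia.
Qed.
End Br.

Unset Implicit Arguments.

Theorem theorem4p1 (R : comPzRingType) (C : algType R)
    (Delta : C -> tens C) (eps : C -> R) :
  is_bialgebra Delta eps ->
  [/\
   (* ext is a well-defined map C^{(x)n} -> Hom(C, C^{(x)n}) *)
   (forall (n : nat) (x y : tens C), twf n x -> twf n y -> teq n x y ->
      heq n (ext Delta eps n x) (ext Delta eps n y)) /\
   (forall (n : nat) (x : tens C), twf n x -> thom n (ext Delta eps n x)),
   (* ext induces a map Cotor^n_C(k,k) -> HH^n_coalg(C,C): cocycles go to
      cocycles and coboundaries to coboundaries *)
   (forall (n : nat) (x : tens C), OC_cocycle Delta eps n x ->
      CE_cocycle Delta n (ext Delta eps n x)) /\
   (forall (n : nat) (y : tens C), twf n y ->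
      CE_cobound Delta n.+1 (ext Delta eps n.+1 (odiff (OC_op Delta eps) n y))),
   (* the induced map is injective *)
   (forall (n : nat) (x : tens C), OC_cocycle Delta eps n x ->
      CE_cobound Delta n (ext Delta eps n x) -> OC_cobound Delta eps n x),
   (* it preserves the unit e of the cup product *)
   heq 0 (ext Delta eps 0 (@OC_e R C)) (CE_e eps) /\
   (* it preserves cup products in cohomology *)
   (forall (m n : nat) (x y : tens C),
      OC_cocycle Delta eps m x -> OC_cocycle Delta eps n y ->
      CE_cobound Delta (m + n)
        (oadd (CE_op Delta)
           (ext Delta eps (m + n) (ocup (OC_op Delta eps) m x y))
           (oneg (CE_op Delta)
              (ocup (CE_op Delta) m (ext Delta eps m x) (ext Delta eps n y))))) &
   (* it preserves Gerstenhaber brackets in cohomology *)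
   (forall (m n : nat) (x y : tens C),
      OC_cocycle Delta eps m x -> OC_cocycle Delta eps n y ->
      CE_cobound Delta (m + n).-1
        (oadd (CE_op Delta)
           (ext Delta eps (m + n).-1 (obracket (OC_op Delta eps) m n x y))
           (oneg (CE_op Delta)
              (obracket (CE_op Delta) m n (ext Delta eps m x) (ext Delta eps n y)))))].
Proof.
move=> HB; split.
- split; first by move=> n x y _ _ H; exact: ext_teq.
  by move=> n x Hx; exact (ext_thom HB Hx).
- split.
    move=> n x [Hx H]; split; first exact (ext_thom HB Hx).
    move=> c; apply: teq_trans (teq_sym (ext_odiff HB Hx c)) _.
    exact: ext_teq H c.
  move=> n y Hy; exists (ext Delta eps n y); split; first exact (ext_thom HB Hy).
  exact (ext_odiff HB Hy).
- move=> [|k] x [Hx Hc] /=.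
    by move=> H; apply: teq_trans (teq_sym (ext_at1 HB Hx)) (H 1).
  move=> [g [Hg H]]; exists (g 1); split; first exact: (thom_wf Hg 1).
  apply: teq_trans (teq_sym (ext_at1 HB Hx)) _.
  apply: teq_trans (H 1) _.
  exact (odiff_at1 HB Hg).
- split.
    by move=> c M phi _; rewrite /ext /= !teval_seq1 mul1r.
  move=> m n x y [Hx _] [Hy _]; apply: (cobound_of_heq Delta eps).
  rewrite /ocup.
  refine (heq_trans (ext_circ' HB (i := m) (m := m.+1) (twf_OC Delta eps (i := 0) (@twf_mu R C) Hx erefl) Hy (ltnSn m) erefl) _).
  exact (CEc1 (ext_circ_mul HB (i := 0) Hx erefl) (ext_thom HB Hy) (ltnSn m)).
move=> m n x y [Hx _] [Hy _]; apply: (cobound_of_heq Delta eps).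
exact (ext_bracket HB Hx Hy).
Qed.
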